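(* Let $S$ be an isolated invariant set with isolating neighborhood $N$ (so $S=\operatorname{Inv} N$). For any neighborhood $V$ of $S$ in $N$ there is an $\varepsilon>0$ with $C_\varepsilon(N,S)\subset V$.
   Context: Let $X$ be a locally compact metric space with metric $d$, $U\subset X$ open and $f:U\to X$ continuous. A solution through $x$ is a map $\sigma:\mathbb Z\to U$ with $\sigma(0)=x$ and $f(\sigma(n))=\sigma(n+1)$ for all $n$; for $N\subset U$, $\operatorname{Inv} N$ is the set of $x\in N$ admitting a solution through $x$ with all values in $N$. A compact $N\subset U$ is an isolating neighborhood if $\operatorname{Inv} N\subset\operatorname{Int} N$; $S$ is an isolated invariant set if $S=\operatorname{Inv} N$ for some isolating neighborhood $N$. For $\varepsilon>0$, a sequence $\{x_n\}_{n=q}^p$ is an $\varepsilon$-chain if $d(f(x_n),x_{n+1})<\varepsilon$ for $n=q,\dots,p-1$. The $\varepsilon$-chain neighborhood $C_\varepsilon(N,S)$ is the set of all $x\in N$ such that for some $k\ge0$ there is an $\varepsilon$-chain $\{x_n\}_{n=-k}^k\subset N$ with $x_0=x$ and $x_k,x_{-k}\in S$. *)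

(* Defs.v *)
From HB Require Import structures.
From mathcomp Require Import all_boot all_order all_algebra.
From mathcomp Require Import all_classical all_reals all_analysis.
Set Implicit Arguments. Unset Strict Implicit. Unset Printing Implicit Defensive.
Import Order.TTheory GRing.Theory Num.Theory.
Local Open Scope classical_set_scope.
Local Open Scope ring_scope.

(* A map f : U -> X is modelled as f : X -> X, only its values on U matter. *)

Definition is_solution {X : Type} (U : set X) (f : X -> X) (x : X)
  (sigma : int -> X) : Prop :=
  sigma 0 = x /\ (forall n : int, U (sigma n)) /\
  (forall n : int, f (sigma n) = sigma (n + 1)).

Definition InvN {X : Type} (U : set X) (f : X -> X) (N : set X) : set X :=
  [set x | N x /\ exists sigma : int -> X,
             is_solution U f x sigma /\ (forall n : int, N (sigma n))].

Definition isolating_neighborhood {X : topologicalType} (U : set X)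
  (f : X -> X) (N : set X) : Prop :=
  compact N /\ N `<=` U /\ InvN U f N `<=` interior N.

Definition eps_chain {R : realType} {X : metricType R} (f : X -> X) (eps : R)
  (q p : int) (c : int -> X) : Prop :=
  forall n : int, q <= n -> n < p -> mdist (f (c n)) (c (n + 1)) < eps.

Definition chain_nbhd {R : realType} {X : metricType R} (f : X -> X) (eps : R)
  (N S : set X) : set X :=
  [set x | N x /\ exists (k : nat) (c : int -> X),
     eps_chain f eps (- (k%:Z)) k%:Z c /\
     (forall n : int, - (k%:Z) <= n -> n <= k%:Z -> N (c n)) /\
     c 0 = x /\ S (c k%:Z) /\ S (c (- (k%:Z)))].

Definition nbhd_in {X : topologicalType} (N S V : set X) : Prop :=
  V `<=` N /\ exists O : set X, open O /\ S `<=` O /\ O `&` N `<=` V.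

(* Main.v *)
Require Import Defs.
From mathcomp Require Import all_boot all_order all_algebra.
From mathcomp Require Import all_classical all_reals all_analysis.
From mathcomp Require Import zify.
Local Open Scope ring_scope.
Local Open Scope classical_set_scope.
Import Order.TTheory GRing.Theory Num.Theory.

Section Aux.
Context (R : realType) (X : metricType R) (U : set X) (f : X -> X) (N : set X).

Lemma inv_sol x : InvN U f N x -> exists s : int -> X,
  s 0 = x /\ (forall n, N (s n)) /\ (forall n, f (s n) = s (n + 1)).
Proof. by move=> [_ [s [[s0 [_ sf]] sN]]]; exists s. Qed.

Lemma chain_extend (eps : R) (k : nat) (c : int -> X) : 0 < eps ->
  eps_chain f eps (- (k%:Z)) k%:Z c ->
  (forall n : int, - (k%:Z) <= n -> n <= k%:Z -> N (c n)) ->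
  InvN U f N (c k%:Z) -> InvN U f N (c (- (k%:Z))) ->
  exists d : int -> X, d 0 = c 0 /\ (forall n, N (d n)) /\
    (forall n, mdist (f (d n)) (d (n + 1)) < eps).
Proof.
move=> e0 ch cN /inv_sol [s2 [s20 [s2N s2f]]] /inv_sol [s1 [s10 [s1N s1f]]].
pose d := fun n : int => if n < - (k%:Z) then s1 (n + k%:Z)
  else if k%:Z < n then s2 (n - k%:Z) else c n.
have d1 n : n <= - (k%:Z) -> d n = s1 (n + k%:Z).
  rewrite /d; case: ltP => // h1 h2.
  have -> : n = - (k%:Z) by apply/eqP; rewrite eq_le h1 h2.
  by rewrite addNr s10; case: ltP => //; lia.
have d2 n : k%:Z <= n -> d n = s2 (n - k%:Z).
  rewrite /d; case: ltP => [|_]; first lia.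
  case: ltP => // h1 h2.
  have -> : n = k%:Z by apply/eqP; rewrite eq_le h1 h2.
  by rewrite subrr s20.
have d3 n : - (k%:Z) <= n -> n <= k%:Z -> d n = c n.
  by rewrite /d => h1 h2; case: ltP; [lia|]; case: ltP; [lia|].
exists d; split; first by rewrite d3 //; lia.
split.
  move=> n; case: (leP n (- (k%:Z))) => h; first by rewrite d1.
  case: (leP (k%:Z) n) => h'; first by rewrite d2.
  by rewrite d3; [apply: cN|..]; lia.
move=> n; case: (ltP n (- (k%:Z))) => h.
  rewrite d1; last lia. rewrite d1; last lia.
  by rewrite s1f addrAC mdistxx.
case: (leP (k%:Z) n) => h'.
  rewrite d2 // d2; last lia.
  by rewrite s2f addrAC mdistxx.
rewrite d3 // ?d3; try lia.
by apply: ch.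
Qed.

End Aux.

Import ArrowAsProduct.
From mathcomp Require Import lra.

Theorem mainTheorem9 (R : realType) (X : metricType R)
  (U : set X) (f : X -> X) (N S V : set X) :
  locally_compact [set: X] ->
  open U ->
  {within U, continuous f} ->
  isolating_neighborhood U f N ->
  S = InvN U f N ->
  nbhd_in N S V ->
  exists2 eps : R, (0 < eps)%R & (chain_nbhd f eps N S `<=` V).
Proof.
move=> _ oU fc [cN [NU _]] SE [VN [W [oO [SO ON]]]].
apply: contrapT => H.
have H' (e : R) : 0 < e -> exists x, chain_nbhd f e N S x /\ ~ V x.
  move=> e0; apply: contrapT => nex; apply: H; exists e => // x cx.
  by apply: contrapT => nv; apply: nex; exists x.
have Hc (m : nat) : exists c : int -> X, (forall n, N (c n)) /\
    (forall n, mdist (f (c n)) (c (n + 1)) < m.+1%:R^-1) /\ ~ W (c 0).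
  have mpos : (0:R) < m.+1%:R^-1 by rewrite invr_gt0 ltr0n.
  have [x [[Nx [k [c [ch [cNk [c0 [Sk Smk]]]]]]] nV]] := H' _ mpos.
  have SkI : InvN U f N (c k%:Z) by rewrite -SE.
  have SmkI : InvN U f N (c (- k%:Z)) by rewrite -SE.
  have [d [d0 [dN dch]]] := @chain_extend R X U f N _ k c mpos ch cNk SkI SmkI.
  exists d; split => //; split => // Wd; apply: nV; apply: ON; split => //.
  by rewrite -c0 -d0.
have [cs csP] := choice Hc.
have fc' : {in U, continuous f} by rewrite -continuous_open_subspace.
have := @tychonoff int (fun _ => X) (fun _ => N) (fun _ => cN).
move=> tyc.
have [g [Ag clg]] : [set f | forall i : int, N (f i)] `&` cluster (cs @ \oo) !=set0.
  apply: tyc; exists 0%N => // m _; exact: (csP m).1.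
have gf n : f (g n) = g (n + 1).
  apply: mdist_positivity; apply: contrapT => dne.
  have dpos : 0 < mdist (f (g n)) (g (n + 1)).
    by rewrite lt_neqAle eq_sym mdist_ge0 andbT; apply/eqP.
  pose e := mdist (f (g n)) (g (n + 1)) / 3.
  have e0 : 0 < e by rewrite divr_gt0.
  have Ngn : nbhs (g n) (f @^-1` ball (f (g n)) e).
    apply: (fc' (g n)); first by rewrite inE; apply: NU; apply: Ag.
    exact: nbhsx_ballx.
  have Nb : nbhs g (proj n @^-1` (f @^-1` ball (f (g n)) e) `&`
                    proj (n + 1) @^-1` ball (g (n + 1)) e).
    apply: filterI.
    by apply: (@proj_continuous _ _ n g).
    by apply: (@proj_continuous _ _ (n + 1) g); exact: nbhsx_ballx.
  have Fe : (cs @ \oo) [set h | mdist (f (h n)) (h (n + 1)) < e].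
    have := near_infty_natSinv_lt (PosNum e0); apply: filterS => m /= me.
    exact: lt_trans ((csP m).2.1 n) me.
  have [h [hm [hb1 hb2]]] := clg _ _ Fe Nb.
  move: hb1 hb2; rewrite /proj /= !ballEmdist /= => hb1 hb2.
  have t1 := metric_triangle (f (g n)) (f (h n)) (g (n + 1)).
  have t2 := metric_triangle (f (h n)) (h (n + 1)) (g (n + 1)).
  rewrite (metric_sym (h (n + 1))) in t2.
  move: hm t1 t2 hb1 hb2; rewrite /e /=; lra.
have ng0 : ~ W (g 0).
  move=> Wg.
  have Nb : nbhs g (proj 0 @^-1` W).
    by apply: (@proj_continuous _ _ 0 g); apply: open_nbhs_nbhs; split.
  have Fe : (cs @ \oo) [set h | ~ W (h 0)] by exists 0%N => // m _; exact: (csP m).2.2.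
  by have [h [hW hW']] := clg _ _ Fe Nb.
apply: ng0; apply: SO; rewrite SE; split; first exact: Ag.
exists g; split; last exact: Ag.
by split => //; split => k; [apply: NU; apply: Ag|apply: gf].
Qed.
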